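(* (a) Fix $i\in\{1,\dots,m_x\}$ and suppose $(\underline b,\bar b,\underline S_{[i]},\bar S_{[i]})$ with $\underline S_{[i]}\in\mathbb{D}_+^{\underline m}$, $\bar S_{[i]}\in\mathbb{D}_+^{\bar m}$ satisfies condition (X$_i$). Consider the LMI in $(\underline{\mathbf b},\bar{\mathbf b},\hat{\underline{\mathbf S}}_{[i]},\hat{\bar{\mathbf S}}_{[i]})$: $$\begin{bmatrix} \hat{\underline{\mathbf S}}_{[i]} & \mathbf 0 & \underline{\mathbf b} & \mathbf 0 & \mathbf 0\\ * & \hat{\bar{\mathbf S}}_{[i]} & \bar{\mathbf b} & \mathbf 0 & \mathbf 0\\ * & * & 2v^x_i & V^x_i & V^x_i\\ * & * & * & \mathcal{L}^{\underline P,\underline S_{[i]}^{-1}}_{\underline P,\hat{\underline{\mathbf S}}_{[i]}} & \mathbf 0\\ * & * & * & * & \mathcal{L}^{\bar P,\bar S_{[i]}^{-1}}_{\bar P,\hat{\bar{\mathbf S}}_{[i]}} \end{bmatrix}\succ0.$$ Then it is satisfied by $(\underline b,\bar b,\underline S_{[i]}^{-1},\bar S_{[i]}^{-1})$, and any solution with $\hat{\underline{\mathbf S}}_{[i]}\in\mathbb{D}_+^{\underline m}$, $\hat{\bar{\mathbf S}}_{[i]}\in\mathbb{D}_+^{\bar m}$ gives $(\underline{\mathbf b},\bar{\mathbf b},\hat{\underline{\mathbf S}}_{[i]}^{-1},\hat{\bar{\mathbf S}}_{[i]}^{-1})$ satisfying (X$_i$). (b) Fix $i\in\{1,\dots,m_u\}$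 and suppose $(K,\underline b,\bar b,\underline R_{[i]},\bar R_{[i]})$ with $\underline R_{[i]}\in\mathbb{D}_+^{\underline m}$, $\bar R_{[i]}\in\mathbb{D}_+^{\bar m}$ satisfies condition (U$_i$). Consider the LMI in $(\mathbf K,\underline{\mathbf b},\bar{\mathbf b},\hat{\underline{\mathbf R}}_{[i]},\hat{\bar{\mathbf R}}_{[i]})$: $$\begin{bmatrix} \hat{\underline{\mathbf R}}_{[i]} & \mathbf 0 & \underline{\mathbf b} & \mathbf 0 & \mathbf 0\\ * & \hat{\bar{\mathbf R}}_{[i]} & \bar{\mathbf b} & \mathbf 0 & \mathbf 0\\ * & * & 2v^u_i & V^u_i\mathbf K & V^u_i\mathbf K\\ * & * & * & \mathcal{L}^{\underline P,\underline R_{[i]}^{-1}}_{\underline P,\hat{\underline{\mathbf R}}_{[i]}} & \mathbf 0\\ * & * & * & * & \mathcal{L}^{\bar P,\bar R_{[i]}^{-1}}_{\bar P,\hat{\bar{\mathbf R}}_{[i]}} \end{bmatrix}\succ0.$$ Then it is satisfied by $(K,\underline b,\bar b,\underline R_{[i]}^{-1},\bar R_{[i]}^{-1})$, and any solution with $\hat{\underline{\mathbf R}}_{[i]}\in\mathbb{D}_+^{\underline m}$, $\hat{\bar{\mathbf R}}_{[i]}\in\mathbb{D}_+^{\bar m}$ gives $(\mathbf K,\underline{\mathbf b},\bar{\mathbf b},\hat{\underline{\mathbf R}}_{[i]}^{-1},\hat{\bar{\mathbf R}}_{[i]}^{-1})$ satisfying (U$_i$).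
   Context: Notation: $M_i$ is the $i$-th row of $M$, $b_i$ the $i$-th entry of $b$; $\mathbb{D}_+^m$ is the set of $m\times m$ diagonal matrices with positive diagonal; $\succ0$ means symmetric positive definite; $*$ denotes symmetric blocks. For $\mathbf L,L\in\mathbb{R}^{m\times n}$ and symmetric invertible $\mathbf D,D\in\mathbb{R}^{m\times m}$, $\mathcal{L}^{L,D}_{\mathbf L,\mathbf D}:=\mathbf L^\top D^{-1}L+L^\top D^{-1}\mathbf L-L^\top D^{-1}\mathbf DD^{-1}L$. Fixed data: $\underline P\in\mathbb{R}^{\underline m\times n_x}$, $\bar P\in\mathbb{R}^{\bar m\times n_x}$, $V^x\in\mathbb{R}^{m_x\times n_x}$, $v^x\in\mathbb{R}^{m_x}$, $V^u\in\mathbb{R}^{m_u\times n_u}$, $v^u\in\mathbb{R}^{m_u}$. Variables $\underline b\in\mathbb{R}^{\underline m}$, $\bar b\in\mathbb{R}^{\bar m}$, $K\in\mathbb{R}^{n_u\times n_x}$. Condition (X$_i$): $$\begin{bmatrix}2v^x_i-\underline b^\top\underline S_{[i]}\underline b-\bar b^\top\bar S_{[i]}\bar b & V^x_i & V^x_i\\ * & \underline P^\top\underline S_{[i]}\underline P & \mathbf 0\\ * & * & \bar P^\top\bar S_{[i]}\bar P\end{bmatrix}\succ0.$$ Condition (U$_i$): $$\begin{bmatrix}2v^u_i-\underline b^\top\underline R_{[i]}\underline b-\bar b^\top\bar R_{[i]}\bar b & V^u_iK & V^u_iK\\ * & \underline P^\top\underline R_{[i]}\underline P & \mathbf 0\\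 * & * & \bar P^\top\bar R_{[i]}\bar P\end{bmatrix}\succ0.$$ *)

(* Defs.v *)
From mathcomp Require Import all_boot all_order all_algebra.
Set Implicit Arguments. Unset Strict Implicit. Unset Printing Implicit Defensive.
Import Order.TTheory GRing.Theory Num.Theory.
Local Open Scope ring_scope.

Definition posdef (R : realFieldType) (n : nat) (M : 'M[R]_n) : Prop :=
  M^T = M /\ forall x : 'cV[R]_n, x != 0 -> 0 < (x^T *m M *m x) 0 0.

Definition diagpos (R : realFieldType) (m : nat) (S : 'M[R]_m) : Prop :=
  is_diag_mx S /\ forall i : 'I_m, 0 < S i i.

Definition Lcal (R : realFieldType) (m n : nat)
    (L : 'M[R]_(m, n)) (D : 'M[R]_m) (Lb : 'M[R]_(m, n)) (Db : 'M[R]_m)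
    : 'M[R]_n :=
  Lb^T *m invmx D *m L + L^T *m invmx D *m Lb
  - L^T *m invmx D *m Db *m invmx D *m L.

Definition sym2 (R : realFieldType) (p q : nat)
    (A : 'M[R]_p) (B : 'M[R]_(p, q)) (D : 'M[R]_q) : 'M[R]_(p + q) :=
  block_mx A B B^T D.

(* Condition (X_i) / (U_i): the 3x3 symmetric block matrix
   [ s  w  w ; * P1^T S1 P1  0 ; * * P2^T S2 P2 ],
   with s = 2 v_i - b1^T S1 b1 - b2^T S2 b2 (a 1x1 matrix). *)
Definition cond3 (R : realFieldType) (m1 m2 n : nat)
    (P1 : 'M[R]_(m1, n)) (P2 : 'M[R]_(m2, n)) (vi : R) (w : 'rV[R]_n)
    (b1 : 'cV[R]_m1) (b2 : 'cV[R]_m2) (S1 : 'M[R]_m1) (S2 : 'M[R]_m2)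
    : 'M[R]_(1 + n + n) :=
  sym2 (sym2 ((2 * vi)%:M - b1^T *m S1 *m b1 - b2^T *m S2 *m b2) w
             (P1^T *m S1 *m P1))
       (col_mx w 0)
       (P2^T *m S2 *m P2).

(* The 5x5 symmetric block LMI matrix
   [ Sh1 0 b1 0 0 ; * Sh2 b2 0 0 ; * * 2v_i w w ; * * * L1 0 ; * * * * L2 ]
   with L1 = Lcal P1 S1^-1 P1 Sh1, L2 = Lcal P2 S2^-1 P2 Sh2
   (S1, S2 the fixed, given matrices). *)
Definition lmi5 (R : realFieldType) (m1 m2 n : nat)
    (P1 : 'M[R]_(m1, n)) (P2 : 'M[R]_(m2, n)) (vi : R) (w : 'rV[R]_n)
    (S1 : 'M[R]_m1) (S2 : 'M[R]_m2)
    (b1 : 'cV[R]_m1) (b2 : 'cV[R]_m2) (Sh1 : 'M[R]_m1) (Sh2 : 'M[R]_m2)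
    : 'M[R]_(m1 + m2 + 1 + n + n) :=
  sym2 (sym2 (sym2 (sym2 Sh1 0 Sh2) (col_mx b1 b2) (2 * vi)%:M)
             (col_mx (col_mx 0 0) w)
             (Lcal P1 (invmx S1) P1 Sh1))
       (col_mx (col_mx (col_mx 0 0) w) 0)
       (Lcal P2 (invmx S2) P2 Sh2).

(* Main.v *)
Require Import Defs.
From mathcomp Require Import all_boot all_order all_algebra.
From mathcomp Require Import ring lra.
Set Implicit Arguments. Unset Strict Implicit. Unset Printing Implicit Defensive.
Import Order.TTheory GRing.Theory Num.Theory.
Local Open Scope ring_scope.

Section S.
Variable R : realFieldType.

Definition qf p (A : 'M[R]_p) (x : 'cV[R]_p) : R := (x^T *m A *m x) 0 0.
Definition bf p q (a : 'cV[R]_p) (B : 'M[R]_(p,q)) (b : 'cV[R]_q) : R :=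
  (a^T *m B *m b) 0 0.

Lemma diag_sym m (S : 'M[R]_m) : is_diag_mx S -> S^T = S.
Proof.
move/is_diag_mxP=> H; apply/matrixP=> i j; rewrite mxE.
case: (eqVneq i j) => [->//|ne].
by rewrite !H // eq_sym.
Qed.

Lemma qf_diag m (S : 'M[R]_m) x : is_diag_mx S ->
  qf S x = \sum_i S i i * x i 0 ^+ 2.
Proof.
move/is_diag_mxP=> H; rewrite /qf mxE; apply: eq_bigr => j _.
rewrite mxE (bigD1 j) //= big1 ?addr0; last first.
  by move=> k kj; rewrite H ?mulr0.
rewrite [x^T 0 j]mxE; ring.
Qed.

Lemma diagpos_ge0 m (S : 'M[R]_m) x : diagpos S -> 0 <= qf S x.
Proof.
case=> Hd Hp; rewrite qf_diag //; apply: sumr_ge0 => i _.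
by rewrite mulr_ge0 ?sqr_ge0 // ltW.
Qed.

Lemma diagpos_gt0 m (S : 'M[R]_m) x : diagpos S -> x != 0 -> 0 < qf S x.
Proof.
move=> [Hd Hp] xn0; rewrite qf_diag //.
have [i xi] : exists i, x i 0 != 0.
  apply/existsP; apply: contraR xn0 => /existsPn H.
  apply/eqP/matrixP=> i j; rewrite (ord1 j) mxE; exact/eqP/negPn/H.
rewrite (bigD1 i) //=; apply: ltr_pwDl.
  by rewrite mulr_gt0 // lt_def sqr_ge0 sqrf_eq0 xi.
apply: sumr_ge0 => k _; by rewrite mulr_ge0 ?sqr_ge0 // ltW.
Qed.


Lemma diag_unit m (S : 'M[R]_m) : diagpos S -> S \in unitmx.
Proof.
case=> /diag_mxP [d ->] Hp; rewrite unitmxE det_diag unitfE.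
rewrite prodf_seq_neq0; apply/allP => i _ /=.
have := Hp i; rewrite mxE eqxx mulr1n => h; by rewrite gt_eqF.
Qed.

Lemma tr11 (A : 'M[R]_1) : A^T = A.
Proof. by apply/matrixP=> i j; rewrite (ord1 i) (ord1 j) mxE. Qed.

Lemma addE p q (A B : 'M[R]_(p,q)) i j : (A + B) i j = A i j + B i j.
Proof. by rewrite mxE. Qed.
Lemma oppE p q (A : 'M[R]_(p,q)) i j : (- A) i j = - A i j.
Proof. by rewrite mxE. Qed.
Lemma scaleE p q c (A : 'M[R]_(p,q)) i j : (c *: A) i j = c * A i j.
Proof. by rewrite mxE. Qed.
Lemma scalar00 (c : R) : (c%:M : 'M[R]_1) 0 0 = c.
Proof. by rewrite mxE eqxx mulr1n. Qed.

Lemma bf_sym p q a (B : 'M[R]_(p,q)) b : bf b B^T a = bf a B b.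
Proof.
rewrite /bf; have -> : (a^T *m B *m b) 0 0 = ((a^T *m B *m b)^T) 0 0 by rewrite [RHS]mxE.
by rewrite trmx_mul trmx_mul trmxK mulmxA.
Qed.

Lemma qf_sym2 p q (A : 'M[R]_p) B (D : 'M[R]_q) x1 x2 :
  qf (sym2 A B D) (col_mx x1 x2) = qf A x1 + 2 * bf x1 B x2 + qf D x2.
Proof.
rewrite /qf /sym2 tr_col_mx mul_row_block mul_row_col !mulmxDl !addE.
rewrite -/(bf x2 B^T x1) bf_sym -/(bf x1 B x2) -/(qf A x1) -/(qf D x2).
rewrite /bf; ring.
Qed.

Lemma bf_col p1 p2 q a1 a2 (B1 : 'M[R]_(p1,q)) (B2 : 'M[R]_(p2,q)) y :
  bf (col_mx a1 a2) (col_mx B1 B2) y = bf a1 B1 y + bf a2 B2 y.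
Proof. by rewrite /bf tr_col_mx mul_row_col mulmxDl addE. Qed.

Lemma bf0 p q a b : bf a (0 : 'M[R]_(p,q)) b = 0.
Proof. by rewrite /bf mulmx0 mul0mx mxE. Qed.

Definition ip p (a b : 'cV[R]_p) : R := (a^T *m b) 0 0.

Lemma bf_c1 p (a : 'cV[R]_p) b c : bf a b c%:M = c * ip a b.
Proof. by rewrite /bf mul_mx_scalar scaleE. Qed.

Lemma bf_1c q (w : 'rV[R]_q) y c : bf c%:M w y = c * (w *m y) 0 0.
Proof. by rewrite /bf tr_scalar_mx -mulmxA mul_scalar_mx scaleE. Qed.

Lemma qf_c1 (M : 'M[R]_1) c : qf M c%:M = c ^+ 2 * M 0 0.
Proof.
rewrite /qf tr_scalar_mx mul_scalar_mx mul_mx_scalar scalerA scaleE; ring.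
Qed.

Lemma qf_scale p (A : 'M[R]_p) c x : qf A (c *: x) = c ^+ 2 * qf A x.
Proof.
by rewrite /qf linearZ /= linearZ /= -!scalemxAl !scaleE expr2 mulrA. Qed.

Lemma qf_opp p (A : 'M[R]_p) x : qf A (- x) = qf A x.
Proof.
by rewrite -scaleN1r qf_scale expr2 mulN1r opprK mul1r.
Qed.

Lemma ip_scale p c (a b : 'cV[R]_p) : ip (c *: a) b = c * ip a b.
Proof. by rewrite /ip linearZ /= -scalemxAl scaleE. Qed.

Lemma ip_opp p (a b : 'cV[R]_p) : ip (- a) b = - ip a b.
Proof. by rewrite -scaleN1r ip_scale mulN1r. Qed.

Lemma qf_add p (A : 'M[R]_p) a b : A^T = A ->
  qf A (a + b) = qf A a + 2 * bf a A b + qf A b.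
Proof.
move=> sA; rewrite /qf !linearD /=  !mulmxDl !addE.
rewrite -/(bf b A a) -[in bf b A a]sA bf_sym /bf; ring.
Qed.

Lemma qf0 p (A : 'M[R]_p) : qf A 0 = 0.
Proof. by rewrite /qf mulmx0 mxE. Qed.

Lemma inv_sym m (S : 'M[R]_m) : S^T = S -> (invmx S)^T = invmx S.
Proof. by move=> sS; rewrite trmx_inv sS. Qed.

Lemma qf_invK m (S : 'M[R]_m) b : S^T = S -> S \in unitmx ->
  qf S (invmx S *m b) = qf (invmx S) b.
Proof.
move=> sS uS; rewrite /qf trmx_mul inv_sym // !mulmxA mulmxKV //.
Qed.

Lemma ip_inv m (S : 'M[R]_m) b : S^T = S ->
  ip (invmx S *m b) b = qf (invmx S) b.
Proof. by move=> sS; rewrite /ip /qf trmx_mul (inv_sym sS). Qed.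

Lemma bf_invS m (S : 'M[R]_m) u b : S \in unitmx ->
  bf u (invmx S) (S *m b) = ip u b.
Proof. by move=> uS; rewrite /bf /ip mulmxA mulmxKV. Qed.

Lemma qf_invS m (S : 'M[R]_m) b : S^T = S -> S \in unitmx ->
  qf (invmx S) (S *m b) = qf S b.
Proof. by move=> sS uS; rewrite /qf trmx_mul sS !mulmxA mulmxKV //. Qed.

Lemma Lcal_inv m n (P : 'M[R]_(m,n)) S : S \in unitmx ->
  Lcal P (invmx S) P (invmx S) = P^T *m S *m P.
Proof.
move=> uS; rewrite /Lcal invmxK -!mulmxA (mulmxA (invmx S)) mulVmx //.
by rewrite mul1mx addrK.
Qed.

Lemma Lcal_gap m n (P : 'M[R]_(m,n)) S Sh y : S^T = S -> Sh^T = Sh ->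
  Sh \in unitmx ->
  qf (P^T *m invmx Sh *m P) y - qf (Lcal P (invmx S) P Sh) y
  = qf Sh ((invmx Sh - S) *m P *m y).
Proof.
move=> sS sSh uSh.
have e : (invmx Sh - S)^T = invmx Sh - S by rewrite linearB /= (inv_sym sSh) sS.
rewrite /qf /Lcal invmxK !trmx_mul e.
rewrite ?(mulmxBl, mulmxBr, mulmxDl, mulmxDr, mulmxN, mulNmx) !mulmxA.
rewrite ?mulmxK ?mulmxKV // ?(addE, oppE); ring.
Qed.

Lemma sym2_tr p q (A : 'M[R]_p) B (D : 'M[R]_q) : A^T = A -> D^T = D ->
  (sym2 A B D)^T = sym2 A B D.
Proof. by move=> sA sD; rewrite /sym2 tr_block_mx sA sD trmxK. Qed.

Lemma Lcal_tr m n (L : 'M[R]_(m,n)) D Db : D^T = D -> Db^T = Db ->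
  (Lcal L D L Db)^T = Lcal L D L Db.
Proof.
move=> sD sDb; rewrite /Lcal linearB linearD /= !trmx_mul !trmxK inv_sym //.
by rewrite sDb !mulmxA addrC.
Qed.

Lemma PSP_tr m n (P : 'M[R]_(m,n)) S : S^T = S -> (P^T *m S *m P)^T = P^T *m S *m P.
Proof. by move=> sS; rewrite !trmx_mul trmxK sS mulmxA. Qed.

Lemma colP p q (z : 'cV[R]_(p + q)) : exists a b, z = col_mx a b.
Proof. by exists (usubmx z), (dsubmx z); rewrite vsubmxK. Qed.


Lemma bf_scaler p q a (B : 'M[R]_(p,q)) c b : bf a B (c *: b) = c * bf a B b.
Proof. by rewrite /bf -scalemxAr scaleE. Qed.

Lemma inv_pos m (S : 'M[R]_m) v : diagpos S -> v != 0 -> 0 < qf (invmx S) v.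
Proof.
move=> dS vn0; have sS := diag_sym dS.1; have uS := diag_unit dS.
rewrite -qf_invK //; apply: diagpos_gt0 => //.
apply: contraNneq vn0 => h; by rewrite -(mulKVmx uS v) h mulmx0.
Qed.

Lemma inv_ge0 m (S : 'M[R]_m) v : diagpos S -> 0 <= qf (invmx S) v.
Proof.
move=> dS; have sS := diag_sym dS.1; have uS := diag_unit dS.
by rewrite -qf_invK //; apply: diagpos_ge0.
Qed.

Lemma qf_lmi5 m1 m2 n (P1 : 'M[R]_(m1,n)) (P2 : 'M[R]_(m2,n)) vi w S1 S2
   b1 b2 Sh1 Sh2 u1 u2 c y1 y2 :
  qf (lmi5 P1 P2 vi w S1 S2 b1 b2 Sh1 Sh2)
     (col_mx (col_mx (col_mx (col_mx u1 u2) c%:M) y1) y2) =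
  qf Sh1 u1 + qf Sh2 u2 + 2 * (c * ip u1 b1 + c * ip u2 b2) + c ^+ 2 * (2 * vi)
  + 2 * (c * (w *m y1) 0 0) + qf (Lcal P1 (invmx S1) P1 Sh1) y1
  + 2 * (c * (w *m y2) 0 0) + qf (Lcal P2 (invmx S2) P2 Sh2) y2.
Proof.
rewrite /lmi5 !qf_sym2 ?col_mx0 ?bf_col ?bf0 ?bf_c1 ?bf_1c qf_c1 scalar00; ring.
Qed.

Lemma qf_cond3 m1 m2 n (P1 : 'M[R]_(m1,n)) (P2 : 'M[R]_(m2,n)) vi w
   b1 b2 T1 T2 c y1 y2 :
  qf (cond3 P1 P2 vi w b1 b2 T1 T2) (col_mx (col_mx c%:M y1) y2) =
  c ^+ 2 * (2 * vi - qf T1 b1 - qf T2 b2)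
  + 2 * (c * (w *m y1) 0 0) + qf (P1^T *m T1 *m P1) y1
  + 2 * (c * (w *m y2) 0 0) + qf (P2^T *m T2 *m P2) y2.
Proof.
rewrite /cond3 !qf_sym2 ?bf_col ?bf0 ?bf_1c qf_c1 ?(addE, oppE) scalar00.
rewrite -/(qf T1 b1) -/(qf T2 b2); ring.
Qed.


Lemma mx1_0 : (0%:M : 'M[R]_1) = 0.
Proof. by apply/matrixP=> i j; rewrite !mxE mul0rn. Qed.

Lemma partA2 m1 m2 n (P1 : 'M[R]_(m1,n)) (P2 : 'M[R]_(m2,n)) vi w S1 S2
   b1 b2 Sh1 Sh2 :
  diagpos S1 -> diagpos S2 -> diagpos Sh1 -> diagpos Sh2 ->
  posdef (lmi5 P1 P2 vi w S1 S2 b1 b2 Sh1 Sh2) ->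
  posdef (cond3 P1 P2 vi w b1 b2 (invmx Sh1) (invmx Sh2)).
Proof.
move=> d1 d2 dh1 dh2 [_ H].
have sS1 := diag_sym d1.1; have sS2 := diag_sym d2.1.
have sH1 := diag_sym dh1.1; have sH2 := diag_sym dh2.1.
have uH1 := diag_unit dh1; have uH2 := diag_unit dh2.
split.
  rewrite /cond3 sym2_tr //; last exact: PSP_tr (inv_sym sH2).
  rewrite sym2_tr //; [exact: tr11 | exact: PSP_tr (inv_sym sH1)].
move=> x xn0.
change (0 < qf (cond3 P1 P2 vi w b1 b2 (invmx Sh1) (invmx Sh2)) x).
have {}H : forall z, z != 0 -> 0 < qf (lmi5 P1 P2 vi w S1 S2 b1 b2 Sh1 Sh2) z := H.
have [X3 [y2 ex]] := colP x; have [t [y1 eX]] := colP X3.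
rewrite (mx11_scalar t) in eX; set c := t 0 0 in eX; subst x X3.
set u1 := - (c *: (invmx Sh1 *m b1)); set u2 := - (c *: (invmx Sh2 *m b2)).
have := H (col_mx (col_mx (col_mx (col_mx u1 u2) c%:M) y1) y2).
have hz : col_mx (col_mx (col_mx (col_mx u1 u2) c%:M) y1) y2 != 0.
  apply: contraNneq xn0 => /eqP; rewrite !col_mx_eq0.
  by move=> /andP[/andP[/andP[_ /eqP->] /eqP->] /eqP->]; rewrite !eqxx.
move=> /(_ hz); rewrite qf_lmi5 qf_cond3.
rewrite /u1 /u2 !qf_opp !qf_scale !qf_invK // !ip_opp !ip_scale !ip_inv //.
have g1 := Lcal_gap P1 y1 sS1 sH1 uH1; have g2 := Lcal_gap P2 y2 sS2 sH2 uH2.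
have q1 := diagpos_ge0 ((invmx Sh1 - S1) *m P1 *m y1) dh1.
have q2 := diagpos_ge0 ((invmx Sh2 - S2) *m P2 *m y2) dh2.
move=> Hp.
set A := (X in 0 < X).
set B := (X in 0 < X) in Hp.
have -> : A = B + (qf (P1^T *m invmx Sh1 *m P1) y1 - qf (Lcal P1 (invmx S1) P1 Sh1) y1)
               + (qf (P2^T *m invmx Sh2 *m P2) y2 - qf (Lcal P2 (invmx S2) P2 Sh2) y2).
  rewrite /A /B; ring.
rewrite g1 g2; apply: ltr_wpDr => //; apply: ltr_wpDr => //.
Qed.


Lemma partA1 m1 m2 n (P1 : 'M[R]_(m1,n)) (P2 : 'M[R]_(m2,n)) vi w S1 S2 b1 b2 :
  diagpos S1 -> diagpos S2 ->
  posdef (cond3 P1 P2 vi w b1 b2 S1 S2) ->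
  posdef (lmi5 P1 P2 vi w S1 S2 b1 b2 (invmx S1) (invmx S2)).
Proof.
move=> d1 d2 [_ H].
have sS1 := diag_sym d1.1; have sS2 := diag_sym d2.1.
have uS1 := diag_unit d1; have uS2 := diag_unit d2.
have iS1 := inv_sym sS1; have iS2 := inv_sym sS2.
split.
  rewrite /lmi5 sym2_tr //; last exact: Lcal_tr.
  rewrite sym2_tr //; last exact: Lcal_tr.
  rewrite sym2_tr //; last exact: tr11.
  by rewrite sym2_tr.
move=> z zn0.
change (0 < qf (lmi5 P1 P2 vi w S1 S2 b1 b2 (invmx S1) (invmx S2)) z).
have {}H : forall x, x != 0 -> 0 < qf (cond3 P1 P2 vi w b1 b2 S1 S2) x := H.
have [Z4 [y2 ez]] := colP z; have [Z3 [y1 eZ4]] := colP Z4.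
have [U [t eZ3]] := colP Z3; have [u1 [u2 eU]] := colP U.
rewrite (mx11_scalar t) in eZ3; set c := t 0 0 in eZ3; subst z Z4 Z3 U.
have key : qf (lmi5 P1 P2 vi w S1 S2 b1 b2 (invmx S1) (invmx S2))
     (col_mx (col_mx (col_mx (col_mx u1 u2) c%:M) y1) y2) =
   qf (invmx S1) (u1 + c *: (S1 *m b1)) + qf (invmx S2) (u2 + c *: (S2 *m b2))
   + qf (cond3 P1 P2 vi w b1 b2 S1 S2) (col_mx (col_mx c%:M y1) y2).
  rewrite qf_lmi5 qf_cond3 !Lcal_inv // !qf_add // !bf_scaler !qf_scale.
  rewrite !bf_invS // !qf_invS //; ring.
rewrite key.
have [x0|xn0] := eqVneq (col_mx (col_mx c%:M y1) y2) 0.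
  move/eqP: (x0); rewrite !col_mx_eq0 => /andP[/andP[/eqP c0 /eqP y10] /eqP y20].
  rewrite x0 qf0.
  have -> : c = 0 by rewrite -(scalar00 c) c0 mxE.
  rewrite !scale0r !addr0.
  have : (u1 != 0) || (u2 != 0).
    apply: contraNT zn0; rewrite negb_or !negbK => /andP[/eqP-> /eqP->].
    by rewrite c0 y10 y20 !col_mx0.
  case/orP => hu.
    have h1 := inv_pos d1 hu; have h2 := inv_ge0 u2 d2; lra.
  have h1 := inv_pos d2 hu; have h2 := inv_ge0 u1 d1; lra.
have h0 := H _ xn0.
have h1 := inv_ge0 (u1 + c *: (S1 *m b1)) d1.
have h2 := inv_ge0 (u2 + c *: (S2 *m b2)) d2.
lra.
Qed.

End S.

Unset Implicit Arguments.
Theorem theorem3 (R : realFieldType) (nx nu ml mh mx mu : nat)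
    (Pl : 'M[R]_(ml, nx)) (Ph : 'M[R]_(mh, nx))
    (Vx : 'M[R]_(mx, nx)) (vx : 'cV[R]_mx)
    (Vu : 'M[R]_(mu, nu)) (vu : 'cV[R]_mu) :
  (* (a) *)
  (forall (i : 'I_mx) (bl : 'cV[R]_ml) (bh : 'cV[R]_mh)
          (Sl : 'M[R]_ml) (Sh : 'M[R]_mh),
      diagpos Sl -> diagpos Sh ->
      posdef (cond3 Pl Ph (vx i 0) (row i Vx) bl bh Sl Sh) ->
      posdef (lmi5 Pl Ph (vx i 0) (row i Vx) Sl Sh bl bh (invmx Sl) (invmx Sh))
      /\
      (forall (bbl : 'cV[R]_ml) (bbh : 'cV[R]_mh)
              (Shl : 'M[R]_ml) (Shh : 'M[R]_mh),
          diagpos Shl -> diagpos Shh ->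
          posdef (lmi5 Pl Ph (vx i 0) (row i Vx) Sl Sh bbl bbh Shl Shh) ->
          posdef (cond3 Pl Ph (vx i 0) (row i Vx) bbl bbh
                        (invmx Shl) (invmx Shh))))
  /\
  (* (b) *)
  (forall (i : 'I_mu) (K : 'M[R]_(nu, nx)) (bl : 'cV[R]_ml) (bh : 'cV[R]_mh)
          (Rl : 'M[R]_ml) (Rh : 'M[R]_mh),
      diagpos Rl -> diagpos Rh ->
      posdef (cond3 Pl Ph (vu i 0) (row i Vu *m K) bl bh Rl Rh) ->
      posdef (lmi5 Pl Ph (vu i 0) (row i Vu *m K) Rl Rh bl bh
                   (invmx Rl) (invmx Rh))
      /\
      (forall (KK : 'M[R]_(nu, nx)) (bbl : 'cV[R]_ml) (bbh : 'cV[R]_mh)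
              (Rhl : 'M[R]_ml) (Rhh : 'M[R]_mh),
          diagpos Rhl -> diagpos Rhh ->
          posdef (lmi5 Pl Ph (vu i 0) (row i Vu *m KK) Rl Rh bbl bbh Rhl Rhh) ->
          posdef (cond3 Pl Ph (vu i 0) (row i Vu *m KK) bbl bbh
                        (invmx Rhl) (invmx Rhh)))).
Proof.
split.
  move=> i bl bh Sl Sh dl dh Hc; split; first exact: (partA1 dl dh Hc).
  by move=> bbl bbh Shl Shh d3 d4 H5; exact: (partA2 dl dh d3 d4 H5).
move=> i K bl bh Sl Sh dl dh Hc; split; first exact: (partA1 dl dh Hc).
by move=> KK bbl bbh Shl Shh d3 d4 H5; exact: (partA2 dl dh d3 d4 H5).
Qed.
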